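(* Let $M>1$ and let $Q$ be an indefinite ternary quadratic form of Diophantine type $M$ with $\det Q=1$. Then there exists $0<\eta<1$ such that for every $R>10$ the set $\{v\in\Delta_Q\cap\mathcal{H}_{\eta,M}: R\le\|v\|<R^2\}$ is contained in the union of at most six planes through the origin.
   Context: $\|\cdot\|$ is the supremum norm on $\mathbb{R}^3$; for quadratic forms $\|Q\|$ is the maximal absolute value of coefficients. $Q_0(v)=v_2^2-2v_1v_3$. Fix $g\in\mathrm{SL}_3(\mathbb{R})$ with $Q(v)=Q_0(gv)$ for all $v$ and set $\Delta_Q=g\mathbb{Z}^3$. $Q$ is of Diophantine type $M$ if there is $c>0$ with $\|Q-\rho Q'\|>c\|Q'\|^{-M}$ for every nonzero integral ternary quadratic form $Q'$, $\rho=(\det Q')^{-1/3}$. $\mathcal{H}_{\eta,M}=\{v\in\mathbb{R}^3:|Q_0(v)|<\eta\|v\|^{-50M}\}$. *)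

(* Defs.v *)
From Stdlib Require Import Reals List.
Open Scope R_scope.

Definition vec : Type := (R * R * R)%type.
Definition mat3 : Type := (vec * vec * vec)%type.

Definition dot (a b : vec) : R :=
  let '(a1, a2, a3) := a in let '(b1, b2, b3) := b in a1 * b1 + a2 * b2 + a3 * b3.

Definition supn (v : vec) : R :=
  let '(x, y, z) := v in Rmax (Rabs x) (Rmax (Rabs y) (Rabs z)).

Definition mapply (g : mat3) (v : vec) : vec :=
  let '(r1, r2, r3) := g in (dot r1 v, dot r2 v, dot r3 v).

Definition det3 (g : mat3) : R :=
  let '((a, b, c), (d, e, f), (h, i, j)) := g in
  a * (e * j - f * i) - b * (d * j - f * h) + c * (d * i - e * h).

Record qform := QF { c11 : R; c22 : R; c33 : R; c12 : R; c13 : R; c23 : R }.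

Definition qeval (Q : qform) (v : vec) : R :=
  let '(x, y, z) := v in
  c11 Q * x ^ 2 + c22 Q * y ^ 2 + c33 Q * z ^ 2
  + c12 Q * x * y + c13 Q * x * z + c23 Q * y * z.

Definition Q0 (v : vec) : R := let '(v1, v2, v3) := v in v2 ^ 2 - 2 * v1 * v3.

Definition qnorm (Q : qform) : R :=
  Rmax (Rabs (c11 Q)) (Rmax (Rabs (c22 Q)) (Rmax (Rabs (c33 Q))
    (Rmax (Rabs (c12 Q)) (Rmax (Rabs (c13 Q)) (Rabs (c23 Q)))))).

Definition qsub (Q Q' : qform) : qform :=
  QF (c11 Q - c11 Q') (c22 Q - c22 Q') (c33 Q - c33 Q')
     (c12 Q - c12 Q') (c13 Q - c13 Q') (c23 Q - c23 Q').

Definition qscale (r : R) (Q : qform) : qform :=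
  QF (r * c11 Q) (r * c22 Q) (r * c33 Q) (r * c12 Q) (r * c13 Q) (r * c23 Q).

(* Determinant of a quadratic form, normalized so that det Q0 = 1:
   minus the determinant of the symmetric Gram matrix A with Q(v) = v^T A v. *)
Definition qdet (Q : qform) : R :=
  let a := c11 Q in let b := c22 Q in let c := c33 Q in
  let d := c12 Q / 2 in let e := c13 Q / 2 in let f := c23 Q / 2 in
  - (a * (b * c - f * f) - d * (d * c - f * e) + e * (d * f - b * e)).

Definition indefinite (Q : qform) : Prop :=
  (exists v, 0 < qeval Q v) /\ (exists w, qeval Q w < 0).

Definition integral (Q : qform) : Prop :=
  exists a b c d e f : Z,
    Q = QF (IZR a) (IZR b) (IZR c) (IZR d) (IZR e) (IZR f).

Definition qzero : qform := QF 0 0 0 0 0 0.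

Definition cbrt (x : R) : R :=
  if Rlt_dec 0 x then Rpower x (1 / 3)
  else if Rlt_dec x 0 then - Rpower (- x) (1 / 3) else 0.

Definition dioph_type (Q : qform) (M : R) : Prop :=
  exists c : R, 0 < c /\
    forall Q' : qform, integral Q' -> Q' <> qzero -> qdet Q' <> 0 ->
      let rho := cbrt (/ qdet Q') in
      qnorm (qsub Q (qscale rho Q')) > c * Rpower (qnorm Q') (- M).

Definition in_lattice (g : mat3) (v : vec) : Prop :=
  exists a b c : Z, v = mapply g (IZR a, IZR b, IZR c).

Definition in_H (eta M : R) (v : vec) : Prop :=
  Rabs (Q0 v) < eta * Rpower (supn v) (- (50 * M)).

Definition vzero : vec := (0, 0, 0).

(* Main.v *)
Require Import Defs.
From Stdlib Require Import Reals List Lra Lia Psatz ZArith Classical.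
Open Scope R_scope.


Definition cross (a b : vec) : vec :=
  let '(a1, a2, a3) := a in let '(b1, b2, b3) := b in
  (a2 * b3 - a3 * b2, a3 * b1 - a1 * b3, a1 * b2 - a2 * b1).
Definition br (a b c : vec) : R := dot (cross a b) c.
Definition Br (a1 a2 a3 a4 a5 x : vec) : R :=
  br a1 a2 a3 * br a1 a4 a5 * br a2 a4 x * br a3 a5 x
  - br a1 a2 a4 * br a1 a3 a5 * br a2 a3 x * br a4 a5 x.
Definition prodlin (al be : vec) : qform :=
  let '(a1, a2, a3) := al in let '(b1, b2, b3) := be in
  QF (a1 * b1) (a2 * b2) (a3 * b3) (a1 * b2 + a2 * b1) (a1 * b3 + a3 * b1) (a2 * b3 + a3 * b2).
Definition qadd (A B : qform) : qform :=
  QF (c11 A + c11 B) (c22 A + c22 B) (c33 A + c33 B)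
     (c12 A + c12 B) (c13 A + c13 B) (c23 A + c23 B).
Definition BrQ (a1 a2 a3 a4 a5 : vec) : qform :=
  qadd (qscale (br a1 a2 a3 * br a1 a4 a5) (prodlin (cross a2 a4) (cross a3 a5)))
       (qscale (- (br a1 a2 a4 * br a1 a3 a5)) (prodlin (cross a2 a3) (cross a4 a5))).
Definition vadd (a b : vec) : vec :=
  let '(a1, a2, a3) := a in let '(b1, b2, b3) := b in (a1 + b1, a2 + b2, a3 + b3).
Definition vsc (k : R) (a : vec) : vec :=
  let '(a1, a2, a3) := a in (k * a1, k * a2, k * a3).

Lemma qeval_BrQ a1 a2 a3 a4 a5 x : qeval (BrQ a1 a2 a3 a4 a5) x = Br a1 a2 a3 a4 a5 x.
Proof.
  destruct a1 as [[? ?] ?], a2 as [[? ?] ?], a3 as [[? ?] ?], a4 as [[? ?] ?], a5 as [[? ?] ?],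
    x as [[? ?] ?]; unfold BrQ, Br, br; simpl; ring.
Qed.

Definition iscoef (f : qform -> R) : Prop :=
  f = c11 \/ f = c22 \/ f = c33 \/ f = c12 \/ f = c13 \/ f = c23.

Lemma coef_identity f Q a1 a2 a3 a4 a5 p : iscoef f ->
  Br a1 a2 a3 a4 a5 p * f Q =
  qeval Q p * f (BrQ a1 a2 a3 a4 a5)
  - (qeval Q a1 * f (BrQ p a2 a3 a4 a5) + qeval Q a2 * f (BrQ a1 p a3 a4 a5)
     + qeval Q a3 * f (BrQ a1 a2 p a4 a5) + qeval Q a4 * f (BrQ a1 a2 a3 p a5)
     + qeval Q a5 * f (BrQ a1 a2 a3 a4 p)).
Proof.
  intros Hf.
  destruct Q as [q1 q2 q3 q4 q5 q6];
  destruct a1 as [[? ?] ?], a2 as [[? ?] ?], a3 as [[? ?] ?], a4 as [[? ?] ?], a5 as [[? ?] ?],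
    p as [[? ?] ?].
  destruct Hf as [->|[->|[->|[->|[->| ->]]]]]; unfold BrQ, Br, br; simpl; ring.
Qed.

Lemma Br_big a1 a2 a3 a4 a5 :
  Br a1 a2 a3 a4 a5 (vadd (vsc (br a2 a4 a5) a3) (vsc (- br a2 a4 a3) a5)) =
  - (br a1 a2 a4 * br a1 a3 a5 * br a2 a3 a4 * br a2 a3 a5 * br a2 a4 a5 * br a3 a4 a5).
Proof.
  destruct a1 as [[? ?] ?], a2 as [[? ?] ?], a3 as [[? ?] ?], a4 as [[? ?] ?], a5 as [[? ?] ?].
  unfold Br, br; simpl; ring.
Qed.


Definition isZ (x : R) : Prop := exists z : Z, x = IZR z.
Lemma isZ_IZR z : isZ (IZR z). Proof. exists z; reflexivity. Qed.
Lemma isZ_add x y : isZ x -> isZ y -> isZ (x + y).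
Proof. intros [a ->] [b ->]; exists (a + b)%Z; rewrite plus_IZR; reflexivity. Qed.
Lemma isZ_sub x y : isZ x -> isZ y -> isZ (x - y).
Proof. intros [a ->] [b ->]; exists (a - b)%Z; rewrite minus_IZR; reflexivity. Qed.
Lemma isZ_mul x y : isZ x -> isZ y -> isZ (x * y).
Proof. intros [a ->] [b ->]; exists (a * b)%Z; rewrite mult_IZR; reflexivity. Qed.
Lemma isZ_opp x : isZ x -> isZ (- x).
Proof. intros [a ->]; exists (- a)%Z; rewrite opp_IZR; reflexivity. Qed.
Lemma isZ_0 : isZ 0. Proof. exists 0%Z; reflexivity. Qed.
Lemma isZ_1 : isZ 1. Proof. exists 1%Z; reflexivity. Qed.
Lemma isZ_abs x : isZ x -> x <> 0 -> 1 <= Rabs x.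
Proof.
  intros [z ->] Hz. rewrite <- abs_IZR. apply IZR_le.
  assert (z <> 0%Z) by (intro; subst; apply Hz; reflexivity). lia.
Qed.

Ltac zsolve := repeat first [ apply isZ_add | apply isZ_sub | apply isZ_mul | apply isZ_opp
  | apply isZ_IZR | apply isZ_0 | apply isZ_1 | assumption ].

Definition vZ (v : vec) : Prop := let '(x, y, z) := v in isZ x /\ isZ y /\ isZ z.

Lemma cross_Z a b : vZ a -> vZ b -> vZ (cross a b).
Proof.
  destruct a as [[? ?] ?], b as [[? ?] ?]; simpl; intros (?&?&?) (?&?&?); repeat split; zsolve.
Qed.
Lemma dot_Z a b : vZ a -> vZ b -> isZ (dot a b).
Proof.
  destruct a as [[? ?] ?], b as [[? ?] ?]; simpl; intros (?&?&?) (?&?&?); zsolve.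
Qed.
Lemma br_Z a b c : vZ a -> vZ b -> vZ c -> isZ (br a b c).
Proof. intros; unfold br; apply dot_Z; auto; apply cross_Z; auto. Qed.
Lemma Br_Z a1 a2 a3 a4 a5 x : vZ a1 -> vZ a2 -> vZ a3 -> vZ a4 -> vZ a5 -> vZ x ->
  isZ (Br a1 a2 a3 a4 a5 x).
Proof. intros; unfold Br; zsolve; apply br_Z; auto. Qed.

Definition qZ (A : qform) : Prop :=
  isZ (c11 A) /\ isZ (c22 A) /\ isZ (c33 A) /\ isZ (c12 A) /\ isZ (c13 A) /\ isZ (c23 A).
Lemma qZ_integral A : qZ A -> integral A.
Proof.
  destruct A as [x1 x2 x3 x4 x5 x6]; unfold qZ; simpl; intros ([a ->]&[b ->]&[c ->]&[d ->]&[e ->]&[f ->]).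
  exists a, b, c, d, e, f; reflexivity.
Qed.
Lemma BrQ_Z a1 a2 a3 a4 a5 : vZ a1 -> vZ a2 -> vZ a3 -> vZ a4 -> vZ a5 ->
  qZ (BrQ a1 a2 a3 a4 a5).
Proof.
  intros H1 H2 H3 H4 H5.
  assert (K1 := br_Z _ _ _ H1 H2 H3). assert (K2 := br_Z _ _ _ H1 H4 H5).
  assert (K3 := br_Z _ _ _ H1 H2 H4). assert (K4 := br_Z _ _ _ H1 H3 H5).
  assert (X1 := cross_Z _ _ H2 H4). assert (X2 := cross_Z _ _ H3 H5).
  assert (X3 := cross_Z _ _ H2 H3). assert (X4 := cross_Z _ _ H4 H5).
  unfold BrQ. generalize dependent (br a1 a2 a3). generalize dependent (br a1 a4 a5).
  generalize dependent (br a1 a2 a4). generalize dependent (br a1 a3 a5).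
  destruct (cross a2 a4) as [[? ?] ?], (cross a3 a5) as [[? ?] ?],
    (cross a2 a3) as [[? ?] ?], (cross a4 a5) as [[? ?] ?].
  simpl in *. intros. unfold qZ; simpl. intuition; zsolve.
Qed.


Lemma abs_add x y a b : Rabs x <= a -> Rabs y <= b -> Rabs (x + y) <= a + b.
Proof. intros; eapply Rle_trans; [apply Rabs_triang|lra]. Qed.
Lemma abs_sub x y a b : Rabs x <= a -> Rabs y <= b -> Rabs (x - y) <= a + b.
Proof. intros; eapply Rle_trans; [apply Rabs_triang|]. rewrite Rabs_Ropp; lra. Qed.
Lemma abs_mul x y a b : Rabs x <= a -> Rabs y <= b -> Rabs (x * y) <= a * b.
Proof.
  intros; rewrite Rabs_mult; apply Rmult_le_compat; auto using Rabs_pos.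
Qed.
Lemma abs_opp x a : Rabs x <= a -> Rabs (- x) <= a.
Proof. rewrite Rabs_Ropp; auto. Qed.

Ltac bnd := repeat first [ eassumption | eapply abs_add | eapply abs_sub | eapply abs_mul | eapply abs_opp | apply Rle_refl ].
Ltac bound_with := eapply Rle_trans; [ bnd | ].

Definition vbound (v : vec) (s : R) : Prop :=
  let '(x, y, z) := v in Rabs x <= s /\ Rabs y <= s /\ Rabs z <= s.

Lemma vbound_nonneg v s : vbound v s -> 0 <= s.
Proof. destruct v as [[? ?] ?]; simpl; intros (H&_); eapply Rle_trans; [apply Rabs_pos|eauto]. Qed.

Lemma cross_bound a b sa sb : vbound a sa -> vbound b sb -> vbound (cross a b) (2 * sa * sb).
Proof.
  destruct a as [[? ?] ?], b as [[? ?] ?]; simpl; intros (?&?&?) (?&?&?).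
  repeat split; bound_with; lra.
Qed.
Lemma dot_bound a b sa sb : vbound a sa -> vbound b sb -> Rabs (dot a b) <= 3 * sa * sb.
Proof.
  destruct a as [[? ?] ?], b as [[? ?] ?]; simpl; intros (?&?&?) (?&?&?).
  bound_with; lra.
Qed.
Lemma br_bound a b c sa sb sc : vbound a sa -> vbound b sb -> vbound c sc ->
  Rabs (br a b c) <= 6 * sa * sb * sc.
Proof.
  intros; unfold br. eapply Rle_trans; [eapply dot_bound; [apply cross_bound|]; eauto|lra].
Qed.

Definition qcoefb (A : qform) (s : R) : Prop := forall f, iscoef f -> Rabs (f A) <= s.

Lemma prodlin_bound a b sa sb : vbound a sa -> vbound b sb -> qcoefb (prodlin a b) (2 * sa * sb).
Proof.
  intros Ha Hb. pose proof (vbound_nonneg _ _ Ha). pose proof (vbound_nonneg _ _ Hb).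
  revert Ha Hb.
  destruct a as [[? ?] ?], b as [[? ?] ?]; simpl; intros (?&?&?) (?&?&?) f Hf.
  destruct Hf as [->|[->|[->|[->|[->| ->]]]]]; simpl; bound_with; nra.
Qed.

Lemma BrQ_bound a1 a2 a3 a4 a5 s1 s2 s3 s4 s5 :
  vbound a1 s1 -> vbound a2 s2 -> vbound a3 s3 -> vbound a4 s4 -> vbound a5 s5 ->
  qcoefb (BrQ a1 a2 a3 a4 a5) (576 * (s1^2 * s2^2 * s3^2 * s4^2 * s5^2)).
Proof.
  intros H1 H2 H3 H4 H5 f Hf.
  pose proof (vbound_nonneg _ _ H1). pose proof (vbound_nonneg _ _ H2).
  pose proof (vbound_nonneg _ _ H3). pose proof (vbound_nonneg _ _ H4).
  pose proof (vbound_nonneg _ _ H5).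
  assert (B1 := br_bound _ _ _ _ _ _ H1 H2 H3). assert (B2 := br_bound _ _ _ _ _ _ H1 H4 H5).
  assert (B3 := br_bound _ _ _ _ _ _ H1 H2 H4). assert (B4 := br_bound _ _ _ _ _ _ H1 H3 H5).
  assert (P1 := prodlin_bound _ _ _ _ (cross_bound _ _ _ _ H2 H4) (cross_bound _ _ _ _ H3 H5) f Hf).
  assert (P2 := prodlin_bound _ _ _ _ (cross_bound _ _ _ _ H2 H3) (cross_bound _ _ _ _ H4 H5) f Hf).
  assert (E : f (BrQ a1 a2 a3 a4 a5) =
     br a1 a2 a3 * br a1 a4 a5 * f (prodlin (cross a2 a4) (cross a3 a5))
     + (- (br a1 a2 a4 * br a1 a3 a5)) * f (prodlin (cross a2 a3) (cross a4 a5))).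
  { unfold BrQ. destruct Hf as [->|[->|[->|[->|[->| ->]]]]]; reflexivity. }
  rewrite E. bound_with. right; ring.
Qed.


Definition e1 : vec := (1, 0, 0).
Definition e2 : vec := (0, 1, 0).
Definition e3 : vec := (0, 0, 1).
Definition e12 : vec := (1, 1, 0).
Definition e13 : vec := (1, 0, 1).
Definition e23 : vec := (0, 1, 1).

Lemma six_zero X : qeval X e1 = 0 -> qeval X e2 = 0 -> qeval X e3 = 0 ->
  qeval X e12 = 0 -> qeval X e13 = 0 -> qeval X e23 = 0 -> forall x, qeval X x = 0.
Proof.
  destruct X as [q1 q2 q3 q4 q5 q6]; unfold e1, e2, e3, e12, e13, e23; simpl; intros.
  assert (q1 = 0) by nra. assert (q2 = 0) by nra. assert (q3 = 0) by nra.
  subst q1 q2 q3.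
  assert (q4 = 0) by nra. assert (q5 = 0) by nra. assert (q6 = 0) by nra. subst.
  destruct x as [[? ?] ?]; simpl; ring.
Qed.

Lemma small_p a1 a2 a3 a4 a5 : (exists x, Br a1 a2 a3 a4 a5 x <> 0) ->
  exists p, vbound p 1 /\ vZ p /\ Br a1 a2 a3 a4 a5 p <> 0.
Proof.
  intros [x Hx].
  assert (V1 : vbound e1 1 /\ vZ e1) by (simpl; rewrite ?Rabs_R0, ?Rabs_R1; repeat split; try lra; zsolve).
  assert (V2 : vbound e2 1 /\ vZ e2) by (simpl; rewrite ?Rabs_R0, ?Rabs_R1; repeat split; try lra; zsolve).
  assert (V3 : vbound e3 1 /\ vZ e3) by (simpl; rewrite ?Rabs_R0, ?Rabs_R1; repeat split; try lra; zsolve).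
  assert (V4 : vbound e12 1 /\ vZ e12) by (simpl; rewrite ?Rabs_R0, ?Rabs_R1; repeat split; try lra; zsolve).
  assert (V5 : vbound e13 1 /\ vZ e13) by (simpl; rewrite ?Rabs_R0, ?Rabs_R1; repeat split; try lra; zsolve).
  assert (V6 : vbound e23 1 /\ vZ e23) by (simpl; rewrite ?Rabs_R0, ?Rabs_R1; repeat split; try lra; zsolve).
  destruct (Req_dec (Br a1 a2 a3 a4 a5 e1) 0); [|exists e1; tauto].
  destruct (Req_dec (Br a1 a2 a3 a4 a5 e2) 0); [|exists e2; tauto].
  destruct (Req_dec (Br a1 a2 a3 a4 a5 e3) 0); [|exists e3; tauto].
  destruct (Req_dec (Br a1 a2 a3 a4 a5 e12) 0); [|exists e12; tauto].
  destruct (Req_dec (Br a1 a2 a3 a4 a5 e13) 0); [|exists e13; tauto].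
  destruct (Req_dec (Br a1 a2 a3 a4 a5 e23) 0); [|exists e23; tauto].
  exfalso; apply Hx. rewrite <- qeval_BrQ. apply six_zero; rewrite qeval_BrQ; auto.
Qed.

Definition close (A B : qform) (h : R) : Prop := forall f, iscoef f -> Rabs (f A - f B) <= h.

Lemma trip a b c x y z T h : 1 <= T -> 0 <= h <= 1 ->
  Rabs a <= T -> Rabs b <= T -> Rabs c <= T -> Rabs x <= h -> Rabs y <= h -> Rabs z <= h ->
  Rabs ((a + x) * (b + y) * (c + z) - a * b * c) <= 7 * T ^ 2 * h.
Proof.
  intros.
  replace ((a + x) * (b + y) * (c + z) - a * b * c) with
    (x * b * c + a * y * c + a * b * z + x * y * c + x * b * z + a * y * z + x * y * z) by ring.
  bound_with. assert (h * h <= T * h) by nra. assert (h * h * h <= T * T * h) by nra.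
  nra.
Qed.

Lemma abs_half x : Rabs (x / 2) = Rabs x / 2.
Proof. unfold Rdiv; rewrite Rabs_mult, Rabs_inv, (Rabs_right 2) by lra; reflexivity. Qed.

Lemma qdet_lip A B T h : 1 <= T -> 0 <= h <= 1 -> qcoefb A T -> close A B h ->
  Rabs (qdet B - qdet A) <= 42 * T ^ 2 * h.
Proof.
  intros HT Hh HA HB.
  assert (A1 := HA c11 ltac:(unfold iscoef; tauto)). assert (A2 := HA c22 ltac:(unfold iscoef; tauto)).
  assert (A3 := HA c33 ltac:(unfold iscoef; tauto)). assert (A4 := HA c12 ltac:(unfold iscoef; tauto)).
  assert (A5 := HA c13 ltac:(unfold iscoef; tauto)). assert (A6 := HA c23 ltac:(unfold iscoef; tauto)).
  assert (B1 := HB c11 ltac:(unfold iscoef; tauto)). assert (B2 := HB c22 ltac:(unfold iscoef; tauto)).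
  assert (B3 := HB c33 ltac:(unfold iscoef; tauto)). assert (B4 := HB c12 ltac:(unfold iscoef; tauto)).
  assert (B5 := HB c13 ltac:(unfold iscoef; tauto)). assert (B6 := HB c23 ltac:(unfold iscoef; tauto)).
  destruct A as [a b c d e f], B as [a' b' c' d' e' f']; simpl in *.
  rewrite <- Rabs_Ropp in B1, B2, B3, B4, B5, B6.
  replace (- (a - a')) with (a' - a) in B1 by ring. replace (- (b - b')) with (b' - b) in B2 by ring.
  replace (- (c - c')) with (c' - c) in B3 by ring. replace (- (d - d')) with (d' - d) in B4 by ring.
  replace (- (e - e')) with (e' - e) in B5 by ring. replace (- (f - f')) with (f' - f) in B6 by ring.
  set (x1 := a' - a) in *. set (x2 := b' - b) in *. set (x3 := c' - c) in *.
  set (x4 := (d' - d) / 2). set (x5 := (e' - e) / 2). set (x6 := (f' - f) / 2).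
  assert (Rabs x4 <= h) by (unfold x4; rewrite abs_half; lra).
  assert (Rabs x5 <= h) by (unfold x5; rewrite abs_half; lra).
  assert (Rabs x6 <= h) by (unfold x6; rewrite abs_half; lra).
  assert (Rabs (d / 2) <= T) by (rewrite abs_half; lra).
  assert (Rabs (e / 2) <= T) by (rewrite abs_half; lra).
  assert (Rabs (f / 2) <= T) by (rewrite abs_half; lra).
  assert (E : qdet (QF a' b' c' d' e' f') - qdet (QF a b c d e f) =
    - ((a + x1) * (b + x2) * (c + x3) - a * b * c)
    + ((a + x1) * (f/2 + x6) * (f/2 + x6) - a * (f/2) * (f/2))
    + ((d/2 + x4) * (d/2 + x4) * (c + x3) - (d/2) * (d/2) * c)
    - ((d/2 + x4) * (f/2 + x6) * (e/2 + x5) - (d/2) * (f/2) * (e/2))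
    - ((e/2 + x5) * (d/2 + x4) * (f/2 + x6) - (e/2) * (d/2) * (f/2))
    + ((e/2 + x5) * (b + x2) * (e/2 + x5) - (e/2) * b * (e/2))).
  { unfold qdet, x1, x2, x3, x4, x5, x6; simpl; field. }
  rewrite E.
  assert (T1 := trip a b c x1 x2 x3 T h HT Hh A1 A2 A3 B1 B2 B3).
  assert (T2 := trip a (f/2) (f/2) x1 x6 x6 T h HT Hh ltac:(auto) ltac:(auto) ltac:(auto) B1 ltac:(auto) ltac:(auto)).
  assert (T3 := trip (d/2) (d/2) c x4 x4 x3 T h HT Hh ltac:(auto) ltac:(auto) ltac:(auto) ltac:(auto) ltac:(auto) B3).
  assert (T4 := trip (d/2) (f/2) (e/2) x4 x6 x5 T h HT Hh ltac:(auto) ltac:(auto) ltac:(auto) ltac:(auto) ltac:(auto) ltac:(auto)).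
  assert (T5 := trip (e/2) (d/2) (f/2) x5 x4 x6 T h HT Hh ltac:(auto) ltac:(auto) ltac:(auto) ltac:(auto) ltac:(auto) ltac:(auto)).
  assert (T6 := trip (e/2) b (e/2) x5 x2 x5 T h HT Hh ltac:(auto) ltac:(auto) ltac:(auto) ltac:(auto) B2 ltac:(auto)).
  bound_with. lra.
Qed.


Lemma cbrt_cube x : cbrt x ^ 3 = x.
Proof.
  unfold cbrt. destruct (Rlt_dec 0 x).
  - assert (H : 0 < Rpower x (1/3)) by apply exp_pos.
    rewrite <- (Rpower_pow 3 _ H), Rpower_mult. simpl INR.
    replace (1 / 3 * (1 + 1 + 1)) with 1 by field. apply Rpower_1; lra.
  - destruct (Rlt_dec x 0).
    + assert (H : 0 < Rpower (- x) (1/3)) by apply exp_pos.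
      replace ((- Rpower (- x) (1 / 3)) ^ 3) with (- (Rpower (- x) (1 / 3) ^ 3)) by ring.
      rewrite <- (Rpower_pow 3 _ H), Rpower_mult. simpl INR.
      replace (1 / 3 * (1 + 1 + 1)) with 1 by field. rewrite Rpower_1; lra.
    + simpl. lra.
Qed.

Lemma coef_scale f k X : iscoef f -> f (qscale k X) = k * f X.
Proof. intros Hf; destruct Hf as [->|[->|[->|[->|[->| ->]]]]]; reflexivity. Qed.
Lemma coef_sub f A B : iscoef f -> f (qsub A B) = f A - f B.
Proof. intros Hf; destruct Hf as [->|[->|[->|[->|[->| ->]]]]]; reflexivity. Qed.

Lemma qnorm_le A s : qcoefb A s -> qnorm A <= s.
Proof.
  intros H. unfold qnorm.
  repeat apply Rmax_lub; apply H; unfold iscoef; tauto.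
Qed.
Ltac rm := first [ apply Rle_refl | apply Rmax_l | (eapply Rle_trans; [|apply Rmax_r]; rm) ].
Lemma qnorm_ge A f : iscoef f -> Rabs (f A) <= qnorm A.
Proof.
  intros Hf; unfold qnorm.
  destruct Hf as [->|[->|[->|[->|[->| ->]]]]]; rm.
Qed.
Lemma qnorm_pos A : A <> qzero -> 0 < qnorm A.
Proof.
  intros H. destruct (Rle_lt_dec (qnorm A) 0) as [Hle|]; [exfalso|auto].
  apply H. destruct A as [a b c d e f].
  assert (forall g, iscoef g -> g (QF a b c d e f) = 0).
  { intros g Hg. pose proof (qnorm_ge (QF a b c d e f) g Hg).
    pose proof (Rabs_pos (g (QF a b c d e f))).
    destruct (Rcase_abs (g (QF a b c d e f))); [rewrite Rabs_left in *|rewrite Rabs_right in *]; lra. }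
  unfold qzero. f_equal; [apply (H0 c11)|apply (H0 c22)|apply (H0 c33)|apply (H0 c12)|apply (H0 c13)|apply (H0 c23)];
  unfold iscoef; tauto.
Qed.

Lemma qdet_scale k X : qdet (qscale k X) = k ^ 3 * qdet X.
Proof. destruct X; unfold qdet; simpl; field. Qed.

Lemma approx_rho Q Q' lam E T : 1 <= T -> qcoefb Q T -> 0 <= E -> E <= 1 -> 42 * T ^ 2 * E <= 1/2 ->
  close Q (qscale lam Q') E -> qdet Q = 1 ->
  qdet Q' <> 0 /\
  qnorm (qsub Q (qscale (cbrt (/ qdet Q')) Q')) <= (1 + 336 * T ^ 3) * E.
Proof.
  intros HT HQ HE0 HE1 HE2 Hc Hd.
  assert (L := qdet_lip Q (qscale lam Q') T E HT ltac:(lra) HQ Hc).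
  rewrite qdet_scale, Hd in L.
  set (d := qdet Q') in *. set (del := 42 * T ^ 2 * E) in *.
  assert (Hd0 : d <> 0).
  { intro H0; rewrite H0 in L. rewrite Rmult_0_r in L. unfold Rminus in L.
    rewrite Rplus_0_l, Rabs_Ropp, Rabs_R1 in L. lra. }
  split; [exact Hd0|].
  set (rho := cbrt (/ d)).
  assert (Hr3 : rho ^ 3 = / d) by apply cbrt_cube.
  assert (Hr0 : rho <> 0).
  { intro H0. rewrite H0 in Hr3. apply (Rinv_neq_0_compat d Hd0). rewrite <- Hr3. ring. }
  set (t := lam / rho).
  assert (Ht3 : t ^ 3 = lam ^ 3 * d).
  { unfold t. unfold Rdiv. rewrite Rpow_mult_distr, pow_inv, Hr3, Rinv_inv. reflexivity. }
  assert (L2 : Rabs (t ^ 3 - 1) <= del) by (rewrite Ht3; exact L). clear L; rename L2 into L.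
  assert (Ht1 : Rabs (t - 1) <= 4 * del / 3).
  { assert (Hq : 3/4 <= t ^ 2 + t + 1) by (pose proof (pow2_ge_0 (t + 1/2)); nra).
    assert (Hf : Rabs (t ^ 3 - 1) = Rabs (t - 1) * (t ^ 2 + t + 1)).
    { replace (t ^ 3 - 1) with ((t - 1) * (t ^ 2 + t + 1)) by ring.
      rewrite Rabs_mult, (Rabs_right (t ^ 2 + t + 1)) by lra. reflexivity. }
    rewrite Hf in L. pose proof (Rabs_pos (t - 1)). nra. }
  assert (Htabs : 1/3 <= Rabs t).
  { assert (del <= 1/2) by lra.
    assert (H1 : Rabs (t + - (t - 1)) <= Rabs t + Rabs (- (t - 1))) by apply Rabs_triang.
    replace (t + - (t - 1)) with 1 in H1 by ring. rewrite Rabs_Ropp, Rabs_R1 in H1. lra. }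
  assert (Ht0 : t <> 0) by (intro H0; rewrite H0, Rabs_R0 in Htabs; lra).
  apply qnorm_le. intros f Hf.
  rewrite coef_sub, coef_scale by exact Hf.
  assert (Hc1 := Hc f Hf). rewrite coef_scale in Hc1 by exact Hf.
  assert (HQf := HQ f Hf).
  assert (Hl : Rabs (lam * f Q') <= 2 * T).
  { replace (lam * f Q') with (f Q - (f Q - lam * f Q')) by ring.
    bound_with. lra. }
  assert (E1 : f Q - rho * f Q' = (f Q - lam * f Q') + ((t - 1) / t) * (lam * f Q')).
  { unfold t. field. split; auto. intro H0. apply Ht0. unfold t. rewrite H0. unfold Rdiv; ring. }
  rewrite E1.
  assert (Hdiv : Rabs ((t - 1) / t) <= 4 * del).
  { unfold Rdiv. rewrite Rabs_mult, Rabs_inv.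
    assert (0 < Rabs t) by lra.
    apply (Rmult_le_reg_r (Rabs t)); auto.
    rewrite Rmult_assoc, Rinv_l by lra. pose proof (Rabs_pos (t-1)).
    assert (0 <= del) by (unfold del; nra). nra. }
  bound_with. unfold del. assert (0 <= T ^ 2) by nra. nra.
Qed.


Lemma RP_pos x y : 0 < Rpower x y. Proof. apply exp_pos. Qed.
Lemma RP_le1 x y : 1 <= x -> y <= 0 -> Rpower x y <= 1.
Proof. intros. rewrite <- (Rpower_O x) by lra. apply Rle_Rpower; auto. Qed.
Lemma RP_anti a b y : 0 < a <= b -> y <= 0 -> Rpower b y <= Rpower a y.
Proof.
  intros Hab Hy.
  assert (H := Rle_Rpower_l a b (- y) ltac:(lra) Hab).
  replace y with (- - y) by ring. rewrite !(Rpower_Ropp _ (- y)).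
  apply Rinv_le_contravar; auto. apply RP_pos.
Qed.
Lemma RP_powN x n y : 0 < x -> Rpower (x ^ n) y = Rpower x (INR n * y).
Proof. intros. rewrite <- Rpower_pow by auto. apply Rpower_mult. Qed.

Definition adj (g : mat3) : mat3 :=
  let '((a, b, c), (d, e, f), (h, i, j)) := g in
  ((e * j - f * i, c * i - b * j, b * f - c * e),
   (f * h - d * j, a * j - c * h, c * d - a * f),
   (d * i - e * h, b * h - a * i, a * e - b * d)).
Definition Gc (g : mat3) : R :=
  let '((a, b, c), (d, e, f), (h, i, j)) := adj g in
  1 + (Rabs a + Rabs b + Rabs c + Rabs d + Rabs e + Rabs f + Rabs h + Rabs i + Rabs j).

Lemma Gc_ge1 g : 1 <= Gc g.
Proof.
  unfold Gc. destruct (adj g) as [[[[? ?] ?] [[? ?] ?]] [[? ?] ?]].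
  repeat match goal with |- context [Rabs ?x] => pose proof (Rabs_pos x); generalize dependent x end.
  intros; lra.
Qed.

Lemma supn_bounds x y z : Rabs x <= supn (x, y, z) /\ Rabs y <= supn (x, y, z) /\ Rabs z <= supn (x, y, z).
Proof.
  unfold supn. split; [apply Rmax_l|split].
  - eapply Rle_trans; [apply Rmax_l|apply Rmax_r].
  - eapply Rle_trans; [apply Rmax_r|apply Rmax_r].
Qed.

Lemma w_bound g w : det3 g = 1 -> vbound w (Gc g * supn (mapply g w)).
Proof.
  intros Hd.
  assert (E : forall v, mapply (adj g) (mapply g v) = v).
  { intros [[x y] z].
    assert (E0 : mapply (adj g) (mapply g (x, y, z)) = (det3 g * x, det3 g * y, det3 g * z)).
    { destruct g as [[[[a b] c] [[d e] f]] [[h i] j]]. unfold det3, adj, mapply, dot.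
      f_equal; [f_equal|]; ring. }
    rewrite E0, Hd, !Rmult_1_l. reflexivity. }
  rewrite <- (E w) at 1.
  destruct (mapply g w) as [[x y] z] eqn:Hv.
  destruct (supn_bounds x y z) as (Hx&Hy&Hz).
  set (s := supn (x, y, z)) in *.
  assert (0 <= s) by (eapply Rle_trans; [apply Rabs_pos|exact Hx]).
  unfold Gc. destruct (adj g) as [[[[a b] c] [[d e] f]] [[h i] j]].
  unfold mapply, dot, vbound.
  pose proof (Rabs_pos a). pose proof (Rabs_pos b). pose proof (Rabs_pos c).
  pose proof (Rabs_pos d). pose proof (Rabs_pos e). pose proof (Rabs_pos f).
  pose proof (Rabs_pos h). pose proof (Rabs_pos i). pose proof (Rabs_pos j).
  repeat split; bound_with; nra.
Qed.


Lemma approx_exists Q w1 w2 w3 w4 w5 S eps :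
  1 <= S -> 0 <= eps ->
  vZ w1 -> vZ w2 -> vZ w3 -> vZ w4 -> vZ w5 ->
  vbound w1 S -> vbound w2 S -> vbound w3 S -> vbound w4 S -> vbound w5 S ->
  Rabs (qeval Q w1) <= eps -> Rabs (qeval Q w2) <= eps -> Rabs (qeval Q w3) <= eps ->
  Rabs (qeval Q w4) <= eps -> Rabs (qeval Q w5) <= eps ->
  br w1 w2 w4 <> 0 -> br w1 w3 w5 <> 0 -> br w2 w3 w4 <> 0 -> br w2 w3 w5 <> 0 ->
  br w2 w4 w5 <> 0 -> br w3 w4 w5 <> 0 ->
  exists Q' lam, integral Q' /\ Q' <> qzero /\ qnorm Q' <= 576 * S ^ 10 /\
    close Q (qscale lam Q') (2880 * S ^ 8 * eps).
Proof.
  intros HS He Z1 Z2 Z3 Z4 Z5 B1 B2 B3 B4 B5 E1 E2 E3 E4 E5 N1 N2 N3 N4 N5 N6.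
  assert (Hbig : exists x, Br w1 w2 w3 w4 w5 x <> 0).
  { eexists. rewrite Br_big. intro H. apply Ropp_eq_0_compat in H. rewrite Ropp_involutive in H.
    repeat (apply Rmult_integral in H; destruct H as [H|H]); contradiction. }
  destruct (small_p _ _ _ _ _ Hbig) as (p & Bp & Zp & Hp).
  assert (Hp1 : 1 <= Rabs (Br w1 w2 w3 w4 w5 p)) by (apply isZ_abs; auto; apply Br_Z; auto).
  exists (BrQ w1 w2 w3 w4 w5), (qeval Q p / Br w1 w2 w3 w4 w5 p).
  split; [apply qZ_integral, BrQ_Z; auto|].
  split.
  { intro H. apply Hp. rewrite <- qeval_BrQ, H. destruct p as [[? ?] ?]; simpl; ring. }
  split.
  { apply qnorm_le. intros f Hf. eapply Rle_trans; [apply (BrQ_bound _ _ _ _ _ S S S S S); auto|].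
    right; ring. }
  intros f Hf. rewrite coef_scale by auto.
  set (b := Br w1 w2 w3 w4 w5 p) in *.
  assert (Hb0 : b <> 0) by auto.
  assert (Id := coef_identity f Q w1 w2 w3 w4 w5 p Hf). fold b in Id.
  set (Sg := qeval Q w1 * f (BrQ p w2 w3 w4 w5) + qeval Q w2 * f (BrQ w1 p w3 w4 w5) +
       qeval Q w3 * f (BrQ w1 w2 p w4 w5) + qeval Q w4 * f (BrQ w1 w2 w3 p w5) +
       qeval Q w5 * f (BrQ w1 w2 w3 w4 p)) in Id.
  assert (Eq : f Q - qeval Q p / b * f (BrQ w1 w2 w3 w4 w5) = - Sg / b).
  { apply (Rmult_eq_reg_l b); auto. field_simplify; auto. rewrite Id. field. }
  rewrite Eq.
  assert (C1 := BrQ_bound _ _ _ _ _ _ _ _ _ _ Bp B2 B3 B4 B5 f Hf).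
  assert (C2 := BrQ_bound _ _ _ _ _ _ _ _ _ _ B1 Bp B3 B4 B5 f Hf).
  assert (C3 := BrQ_bound _ _ _ _ _ _ _ _ _ _ B1 B2 Bp B4 B5 f Hf).
  assert (C4 := BrQ_bound _ _ _ _ _ _ _ _ _ _ B1 B2 B3 Bp B5 f Hf).
  assert (C5 := BrQ_bound _ _ _ _ _ _ _ _ _ _ B1 B2 B3 B4 Bp f Hf).
  assert (HSg : Rabs Sg <= 2880 * S ^ 8 * eps).
  { unfold Sg. bound_with. right; ring. }
  unfold Rdiv. rewrite Rabs_mult, Rabs_Ropp, Rabs_inv.
  assert (0 < Rabs b) by lra.
  assert (/ Rabs b <= 1).
  { rewrite <- Rinv_1. apply Rinv_le_contravar; lra. }
  assert (0 <= / Rabs b) by (left; apply Rinv_0_lt_compat; lra).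
  pose proof (Rabs_pos Sg). nra.
Qed.


Definition Pset (g : mat3) (eta M Rr : R) (v : vec) : Prop :=
  in_lattice g v /\ in_H eta M v /\ Rr <= supn v < Rr ^ 2.

Lemma vbound_mono w s s' : vbound w s -> s <= s' -> vbound w s'.
Proof. destruct w as [[? ?] ?]; simpl; intros (?&?&?) ?; repeat split; lra. Qed.

Lemma br_mapply g a b c : br (mapply g a) (mapply g b) (mapply g c) = det3 g * br a b c.
Proof.
  destruct g as [[[[? ?] ?] [[? ?] ?]] [[? ?] ?]], a as [[? ?] ?], b as [[? ?] ?], c as [[? ?] ?].
  unfold br, mapply, det3, dot, cross; simpl; ring.
Qed.

Lemma point_data M Q g eta Rr v : 0 < M -> det3 g = 1 ->
  (forall v, qeval Q v = Q0 (mapply g v)) -> 0 < Rr -> 0 <= eta -> Pset g eta M Rr v ->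
  exists w, vZ w /\ v = mapply g w /\ vbound w (Gc g * Rr ^ 2) /\
    Rabs (qeval Q w) <= eta * Rpower Rr (- (50 * M)).
Proof.
  intros HM Hd HQ HR He (HL & HH & HR1 & HR2).
  destruct HL as (a & b & c & ->).
  exists (IZR a, IZR b, IZR c). split; [simpl; repeat split; apply isZ_IZR|].
  split; [reflexivity|]. split.
  - apply (vbound_mono _ (Gc g * supn (mapply g (IZR a, IZR b, IZR c)))).
    + apply w_bound; auto.
    + apply Rmult_le_compat_l; [pose proof (Gc_ge1 g); lra|lra].
  - rewrite HQ. unfold in_H in HH. left. eapply Rlt_le_trans; [exact HH|].
    apply Rmult_le_compat_l; auto. apply RP_anti; lra.
Qed.

Section Consts.
End Consts.

Definition Tc (Q : qform) := qnorm Q + 1.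
Definition K2c (g : mat3) := 2880 * Gc g ^ 8.
Definition K1c (g : mat3) (M : R) := Rpower (576 * Gc g ^ 10) (- M).
Definition Cc (Q : qform) := 1 + 336 * Tc Q ^ 3.
Definition Dc (M c : R) (Q : qform) (g : mat3) :=
  2 + 84 * Tc Q ^ 2 * K2c g + Cc Q * K2c g / (c * K1c g M).
Definition etac M c Q g := / Dc M c Q g.

Lemma Tc_ge1 Q : 1 <= Tc Q.
Proof. unfold Tc. pose proof (qnorm_ge Q c11 ltac:(unfold iscoef; tauto)). pose proof (Rabs_pos (c11 Q)). lra. Qed.

Lemma Dc_facts M c Q g : 0 < c ->
  2 <= Dc M c Q g /\ 84 * Tc Q ^ 2 * K2c g <= Dc M c Q g /\ K2c g <= Dc M c Q g /\
  Cc Q * K2c g * etac M c Q g < c * K1c g M.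
Proof.
  intros Hc.
  pose proof (Tc_ge1 Q). pose proof (Gc_ge1 g).
  assert (HK2 : 0 < K2c g) by (unfold K2c; apply Rmult_lt_0_compat; [lra|apply pow_lt; lra]).
  assert (HK1 : 0 < K1c g M) by apply RP_pos.
  assert (HC : 0 < Cc Q) by (unfold Cc; assert (0 < Tc Q ^ 3) by (apply pow_lt; lra); lra).
  assert (HT2 : 1 <= Tc Q ^ 2) by (rewrite <- (pow1 2); apply pow_incr; lra).
  assert (Hq : 0 < Cc Q * K2c g / (c * K1c g M)) by
    (apply Rdiv_lt_0_compat; [apply Rmult_lt_0_compat; auto| apply Rmult_lt_0_compat; auto]).
  assert (84 * Tc Q ^ 2 * K2c g >= K2c g) by nra.
  unfold Dc, etac. split; [lra|]. split; [lra|]. split; [lra|].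
  set (D := 2 + 84 * Tc Q ^ 2 * K2c g + Cc Q * K2c g / (c * K1c g M)).
  assert (HD : Cc Q * K2c g / (c * K1c g M) < D) by (unfold D; nra).
  assert (0 < D) by lra.
  assert (0 < c * K1c g M) by (apply Rmult_lt_0_compat; auto).
  apply (Rmult_lt_reg_r D); auto. rewrite Rmult_assoc, Rinv_l by lra.
  apply (Rmult_lt_reg_r (/ (c * K1c g M))); [apply Rinv_0_lt_compat; auto|].
  replace (c * K1c g M * D * / (c * K1c g M)) with D by (field; lra).
  unfold Rdiv in HD. lra.
Qed.


Lemma INR16 : INR 16 = 16. Proof. simpl; ring. Qed.
Lemma INR20 : INR 20 = 20. Proof. simpl; ring. Qed.

Lemma core M c Q g Rr v1 v2 v3 v4 v5 :
  1 < M -> 0 < c -> det3 g = 1 -> (forall v, qeval Q v = Q0 (mapply g v)) -> qdet Q = 1 ->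
  (forall Q', integral Q' -> Q' <> qzero -> qdet Q' <> 0 ->
     qnorm (qsub Q (qscale (cbrt (/ qdet Q')) Q')) > c * Rpower (qnorm Q') (- M)) ->
  10 < Rr ->
  Pset g (etac M c Q g) M Rr v1 -> Pset g (etac M c Q g) M Rr v2 -> Pset g (etac M c Q g) M Rr v3 ->
  Pset g (etac M c Q g) M Rr v4 -> Pset g (etac M c Q g) M Rr v5 ->
  br v1 v2 v4 <> 0 -> br v1 v3 v5 <> 0 -> br v2 v3 v4 <> 0 -> br v2 v3 v5 <> 0 ->
  br v2 v4 v5 <> 0 -> br v3 v4 v5 <> 0 -> False.
Proof.
  intros HM Hc Hd HQ HdQ Hdio HR P1 P2 P3 P4 P5 N1 N2 N3 N4 N5 N6.
  destruct (Dc_facts M c Q g Hc) as (D1 & D2 & D3 & D4).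
  set (eta := etac M c Q g) in *.
  assert (Heta : 0 < eta) by (apply Rinv_0_lt_compat; lra).
  destruct (point_data M Q g eta Rr v1 ltac:(lra) Hd HQ ltac:(lra) ltac:(lra) P1) as (w1 & Z1 & -> & B1 & E1).
  destruct (point_data M Q g eta Rr v2 ltac:(lra) Hd HQ ltac:(lra) ltac:(lra) P2) as (w2 & Z2 & -> & B2 & E2).
  destruct (point_data M Q g eta Rr v3 ltac:(lra) Hd HQ ltac:(lra) ltac:(lra) P3) as (w3 & Z3 & -> & B3 & E3).
  destruct (point_data M Q g eta Rr v4 ltac:(lra) Hd HQ ltac:(lra) ltac:(lra) P4) as (w4 & Z4 & -> & B4 & E4).
  destruct (point_data M Q g eta Rr v5 ltac:(lra) Hd HQ ltac:(lra) ltac:(lra) P5) as (w5 & Z5 & -> & B5 & E5).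
  rewrite !br_mapply, Hd, !Rmult_1_l in *.
  set (S := Gc g * Rr ^ 2) in *.
  set (eps := eta * Rpower Rr (- (50 * M))) in *.
  pose proof (Gc_ge1 g) as HG.
  assert (HR2 : 1 <= Rr ^ 2) by (rewrite <- (pow1 2); apply pow_incr; lra).
  assert (HS : 1 <= S) by (unfold S; nra).
  assert (Heps : 0 <= eps) by (unfold eps; left; apply Rmult_lt_0_compat; auto; apply RP_pos).
  destruct (approx_exists Q w1 w2 w3 w4 w5 S eps HS Heps Z1 Z2 Z3 Z4 Z5 B1 B2 B3 B4 B5
     E1 E2 E3 E4 E5 N1 N2 N3 N4 N5 N6) as (Q' & lam & HI & Hnz & Hn & Hcl).
  set (E := 2880 * S ^ 8 * eps) in *.
  assert (HRp : 0 < Rr) by lra.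
  assert (EE : E = K2c g * eta * Rpower Rr (16 - 50 * M)).
  { unfold E, S, eps, K2c. rewrite Rpow_mult_distr, <- pow_mult.
    replace (2 * 8)%nat with 16%nat by reflexivity.
    rewrite <- (Rpower_pow 16 Rr HRp), INR16.
    replace (16 - 50 * M) with (16 + - (50 * M)) by ring. rewrite Rpower_plus. ring. }
  assert (HY : Rpower Rr (16 - 50 * M) <= 1) by (apply RP_le1; lra).
  assert (HYp : 0 < Rpower Rr (16 - 50 * M)) by apply RP_pos.
  assert (HK2 : 0 < K2c g) by (unfold K2c; apply Rmult_lt_0_compat; [lra|apply pow_lt; lra]).
  assert (HEle : E <= K2c g * eta) by (rewrite EE; assert (0 < K2c g * eta) by nra; nra).
  assert (HE0 : 0 <= E) by (rewrite EE; assert (0 < K2c g * eta) by nra; nra).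
  pose proof (Tc_ge1 Q) as HT.
  assert (HT2 : 1 <= Tc Q ^ 2) by (rewrite <- (pow1 2); apply pow_incr; lra).
  assert (HE1 : E <= 1).
  { eapply Rle_trans; [exact HEle|]. unfold eta, etac.
    apply (Rmult_le_reg_r (Dc M c Q g)); [lra|]. rewrite Rmult_assoc, Rinv_l by lra. lra. }
  assert (HE2 : 42 * Tc Q ^ 2 * E <= 1/2).
  { assert (42 * Tc Q ^ 2 * E <= 42 * Tc Q ^ 2 * (K2c g * eta)) by (apply Rmult_le_compat_l; nra).
    assert (84 * Tc Q ^ 2 * (K2c g * eta) <= 1).
    { unfold eta, etac. replace (84 * Tc Q ^ 2 * (K2c g * / Dc M c Q g)) with
        ((84 * Tc Q ^ 2 * K2c g) * / Dc M c Q g) by ring.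
      apply (Rmult_le_reg_r (Dc M c Q g)); [lra|]. rewrite Rmult_assoc, Rinv_l by lra. lra. }
    lra. }
  assert (HQb : qcoefb Q (Tc Q)).
  { intros f Hf. pose proof (qnorm_ge Q f Hf). unfold Tc. lra. }
  destruct (approx_rho Q Q' lam E (Tc Q) HT HQb HE0 HE1 HE2 Hcl HdQ) as (Hdet & Hfin).
  assert (Hlt := Hdio Q' HI Hnz Hdet). fold (Cc Q) in Hfin.
  assert (Hnp := qnorm_pos Q' Hnz).
  assert (Hlow : Rpower (576 * S ^ 10) (- M) <= Rpower (qnorm Q') (- M)) by (apply RP_anti; lra).
  assert (Hsplit : Rpower (576 * S ^ 10) (- M) = K1c g M * Rpower Rr (- (20 * M))).
  { unfold S, K1c. rewrite Rpow_mult_distr, <- pow_mult, <- Rmult_assoc.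
    replace (2 * 10)%nat with 20%nat by reflexivity.
    rewrite <- Rpower_mult_distr.
    - rewrite RP_powN, INR20 by auto. f_equal. f_equal. ring.
    - apply Rmult_lt_0_compat; [lra|apply pow_lt; lra].
    - apply pow_lt; lra. }
  assert (Hsp2 : Rpower Rr (16 - 50 * M) = Rpower Rr (- (20 * M)) * Rpower Rr (16 - 30 * M)).
  { rewrite <- Rpower_plus. f_equal. ring. }
  assert (HX : 0 < Rpower Rr (- (20 * M))) by apply RP_pos.
  assert (HY2 : Rpower Rr (16 - 30 * M) <= 1) by (apply RP_le1; lra).
  assert (HY2p : 0 < Rpower Rr (16 - 30 * M)) by apply RP_pos.
  assert (HCc : 0 < Cc Q) by (unfold Cc; assert (0 < Tc Q ^ 3) by (apply pow_lt; lra); lra).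
  assert (HK1 : 0 < K1c g M) by apply RP_pos.
  assert (Hchain : c * (K1c g M * Rpower Rr (- (20 * M))) <
                   Cc Q * (K2c g * eta * (Rpower Rr (- (20 * M)) * Rpower Rr (16 - 30 * M)))).
  { rewrite <- Hsplit, <- Hsp2, <- EE.
    assert (c * Rpower (576 * S ^ 10) (- M) <= c * Rpower (qnorm Q') (- M)) by (apply Rmult_le_compat_l; lra).
    lra. }
  set (X := Rpower Rr (- (20 * M))) in *. set (Y := Rpower Rr (16 - 30 * M)) in *.
  assert (Cc Q * (K2c g * eta * (X * Y)) <= Cc Q * K2c g * eta * X).
  { replace (Cc Q * (K2c g * eta * (X * Y))) with ((Cc Q * K2c g * eta * X) * Y) by ring.
    assert (0 < Cc Q * K2c g * eta * X) by (apply Rmult_lt_0_compat; [apply Rmult_lt_0_compat; [apply Rmult_lt_0_compat|]|]; auto).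
    apply Rle_trans with ((Cc Q * K2c g * eta * X) * 1); [apply Rmult_le_compat_l; lra | right; ring]. }
  assert (c * K1c g M * X < Cc Q * K2c g * eta * X) by lra.
  assert (c * K1c g M < Cc Q * K2c g * eta) by (apply (Rmult_lt_reg_r X); auto).
  lra.
Qed.


Definition vnz (v : vec) : bool :=
  let '(x, y, z) := v in
  if Req_EM_T x 0 then (if Req_EM_T y 0 then (if Req_EM_T z 0 then false else true) else true) else true.

Lemma vnz_true v : vnz v = true -> v <> vzero.
Proof.
  destruct v as [[x y] z]; unfold vnz, vzero.
  destruct (Req_EM_T x 0), (Req_EM_T y 0), (Req_EM_T z 0); try discriminate;
  intros _ H; inversion H; contradiction.
Qed.
Lemma vnz_false v : vnz v = false -> v = vzero.
Proof.
  destruct v as [[x y] z]; unfold vnz, vzero.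
  destruct (Req_EM_T x 0), (Req_EM_T y 0), (Req_EM_T z 0); try discriminate; subst; auto.
Qed.

Definition pn (a b : vec) : vec :=
  if vnz (cross a b) then cross a b else if vnz (cross a e1) then cross a e1 else cross a e2.

Lemma pn_nz a b : a <> vzero -> pn a b <> vzero.
Proof.
  intros Ha. unfold pn.
  destruct (vnz (cross a b)) eqn:H1; [apply vnz_true; auto|].
  destruct (vnz (cross a e1)) eqn:H2; [apply vnz_true; auto|].
  apply vnz_false in H2. intro H3. apply Ha.
  destruct a as [[x y] z]. unfold cross, e1, e2, vzero in *.
  injection H2; injection H3; intros. f_equal; [f_equal|]; lra.
Qed.

Lemma dot_cross_par a e v : cross a v = vzero -> dot (cross a e) v = 0.
Proof.
  destruct a as [[a1 a2] a3], e as [[e1 e2] e3], v as [[v1 v2] v3].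
  unfold cross, vzero, dot. intro H. injection H; intros H1 H2 H3.
  replace ((a2 * e3 - a3 * e2) * v1 + (a3 * e1 - a1 * e3) * v2 + (a1 * e2 - a2 * e1) * v3)
    with (- (e1 * (a2 * v3 - a3 * v2) + e2 * (a3 * v1 - a1 * v3) + e3 * (a1 * v2 - a2 * v1))) by ring.
  rewrite H1, H2, H3. ring.
Qed.

Lemma pn_par a b v : cross a v = vzero -> dot (pn a b) v = 0.
Proof.
  intros H. unfold pn.
  destruct (vnz (cross a b)); [|destruct (vnz (cross a e1))]; apply dot_cross_par; auto.
Qed.

Lemma pn_plane a b v : cross a b <> vzero -> br a b v = 0 -> dot (pn a b) v = 0.
Proof.
  intros H1 H2. unfold pn. destruct (vnz (cross a b)) eqn:E.
  - exact H2.
  - apply vnz_false in E. contradiction.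
Qed.

Lemma br_cross a b c : br a b c <> 0 -> cross a b <> vzero.
Proof. intros H E. apply H. unfold br. rewrite E. destruct c as [[? ?] ?]; simpl; ring. Qed.

Lemma br_cyc a b c : br a b c = br b c a.
Proof. destruct a as [[? ?] ?], b as [[? ?] ?], c as [[? ?] ?]; unfold br; simpl; ring. Qed.
Lemma br_swap a b c : br a b c = - br b a c.
Proof. destruct a as [[? ?] ?], b as [[? ?] ?], c as [[? ?] ?]; unfold br; simpl; ring. Qed.


Lemma br_acb a b c : br a c b = - br a b c.
Proof. destruct a as [[? ?] ?], b as [[? ?] ?], c as [[? ?] ?]; unfold br; simpl; ring. Qed.

Theorem lemma2p4 (M : R) (Q : qform) (g : mat3) :
  1 < M ->
  det3 g = 1 ->
  (forall v : vec, qeval Q v = Q0 (mapply g v)) ->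
  indefinite Q ->
  qdet Q = 1 ->
  dioph_type Q M ->
  exists eta : R, 0 < eta < 1 /\
    forall Rr : R, 10 < Rr ->
      exists ns : list vec,
        (length ns <= 6)%nat /\ Forall (fun n => n <> vzero) ns /\
        forall v : vec, in_lattice g v -> in_H eta M v ->
          Rr <= supn v < Rr ^ 2 ->
          exists n, In n ns /\ dot n v = 0.
Proof.
  intros HM Hd HQ Hind HdQ [c [Hc Hdio]].
  destruct (Dc_facts M c Q g Hc) as (D1 & _ & _ & _).
  exists (etac M c Q g). split.
  { unfold etac; split; [apply Rinv_0_lt_compat; lra|].
    rewrite <- Rinv_1; apply Rinv_lt_contravar; lra. }
  intros Rr HR.
  assert (Hdio' : forall Q', integral Q' -> Q' <> qzero -> qdet Q' <> 0 ->
     qnorm (qsub Q (qscale (cbrt (/ qdet Q')) Q')) > c * Rpower (qnorm Q') (- M))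
    by (intros; exact (Hdio Q' H H0 H1)).
  pose proof (fun v1 v2 v3 v4 v5 => core M c Q g Rr v1 v2 v3 v4 v5 HM Hc Hd HQ HdQ Hdio' HR) as Core.
  set (P := Pset g (etac M c Q g) M Rr) in *.
  assert (Pnz : forall v, P v -> v <> vzero).
  { intros v (_ & _ & H1 & _) ->.
    assert (supn vzero = 0) by (unfold supn, vzero; rewrite Rabs_R0; unfold Rmax; repeat destruct Rle_dec; lra).
    lra. }
  assert (PI : forall v, in_lattice g v -> in_H (etac M c Q g) M v -> Rr <= supn v < Rr ^ 2 -> P v)
    by (intros; unfold P, Pset; tauto).
  destruct (classic (exists v, P v)) as [[a1 P1]|N1].
  2:{ exists nil. split; [simpl; lia|]. split; [constructor|].
      intros v H1 H2 H3. exfalso. apply N1. exists v. auto. }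
  assert (A1 := Pnz a1 P1).
  destruct (classic (exists v, P v /\ cross a1 v <> vzero)) as [[a2 [P2 X12]]|N2].
  2:{ exists (pn a1 a1 :: nil). split; [simpl; lia|]. split; [constructor; [apply pn_nz; auto|constructor]|].
      intros v H1 H2 H3. exists (pn a1 a1). split; [simpl; auto|].
      apply pn_par. apply NNPP. intro H. apply N2. exists v. auto. }
  destruct (classic (exists v, P v /\ br a1 a2 v <> 0)) as [[a3 [P3 B123]]|N3].
  2:{ exists (pn a1 a2 :: nil). split; [simpl; lia|]. split; [constructor; [apply pn_nz; auto|constructor]|].
      intros v H1 H2 H3. exists (pn a1 a2). split; [simpl; auto|].
      apply pn_plane; auto. apply NNPP. intro H. apply N3. exists v. auto. }
  assert (X13 : cross a1 a3 <> vzero) by (apply (br_cross _ _ a2); rewrite br_acb; intro H; apply B123; lra).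
  assert (X23 : cross a2 a3 <> vzero) by (apply (br_cross _ _ a1); rewrite <- br_cyc; auto).
  assert (A2 := Pnz a2 P2).
  assert (A3 := Pnz a3 P3).
  destruct (classic (exists v, P v /\ br a1 a2 v <> 0 /\ br a1 a3 v <> 0 /\ br a2 a3 v <> 0))
    as [[a4 (P4 & B124 & B134 & B234)]|N4].
  2:{ exists (pn a1 a2 :: pn a1 a3 :: pn a2 a3 :: nil). split; [simpl; lia|].
      split; [repeat constructor; apply pn_nz; auto|].
      intros v H1 H2 H3.
      destruct (Req_dec (br a1 a2 v) 0); [exists (pn a1 a2); split; [simpl; intuition|apply pn_plane; auto]|].
      destruct (Req_dec (br a1 a3 v) 0); [exists (pn a1 a3); split; [simpl; intuition|apply pn_plane; auto]|].
      destruct (Req_dec (br a2 a3 v) 0); [exists (pn a2 a3); split; [simpl; intuition|apply pn_plane; auto]|].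
      exfalso. apply N4. exists v. auto 6. }
  assert (X14 : cross a1 a4 <> vzero) by (apply (br_cross _ _ a2); rewrite br_acb; intro H; apply B124; lra).
  assert (X24 : cross a2 a4 <> vzero) by (apply (br_cross _ _ a1); rewrite <- br_cyc; auto).
  assert (X34 : cross a3 a4 <> vzero) by (apply (br_cross _ _ a1); rewrite <- br_cyc; auto).
  assert (A4 := Pnz a4 P4).
  destruct (classic (exists v, P v /\ br a1 a2 v <> 0 /\ br a1 a3 v <> 0 /\ br a2 a3 v <> 0 /\
              br a1 a4 v <> 0 /\ br a2 a4 v <> 0 /\ br a3 a4 v <> 0))
    as [[a5 (P5 & B125 & B135 & B235 & B145 & B245 & B345)]|N5].
  { exfalso. exact (Core a1 a2 a3 a4 a5 P1 P2 P3 P4 P5 B124 B135 B234 B235 B245 B345). }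
  exists (pn a1 a2 :: pn a1 a3 :: pn a2 a3 :: pn a1 a4 :: pn a2 a4 :: pn a3 a4 :: nil).
  split; [simpl; lia|].
  split; [repeat constructor; apply pn_nz; auto|].
  intros v H1 H2 H3.
  destruct (Req_dec (br a1 a2 v) 0); [exists (pn a1 a2); split; [simpl; intuition|apply pn_plane; auto]|].
  destruct (Req_dec (br a1 a3 v) 0); [exists (pn a1 a3); split; [simpl; intuition|apply pn_plane; auto]|].
  destruct (Req_dec (br a2 a3 v) 0); [exists (pn a2 a3); split; [simpl; intuition|apply pn_plane; auto]|].
  destruct (Req_dec (br a1 a4 v) 0); [exists (pn a1 a4); split; [simpl; intuition|apply pn_plane; auto]|].
  destruct (Req_dec (br a2 a4 v) 0); [exists (pn a2 a4); split; [simpl; intuition|apply pn_plane; auto]|].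
  destruct (Req_dec (br a3 a4 v) 0); [exists (pn a3 a4); split; [simpl; intuition|apply pn_plane; auto]|].
  exfalso. apply N5. exists v. auto 10.
Qed.
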